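(* Let $n,t\in\mathbb{N}$ with $n > t \geq 2$. Then (a) $d_{\max}(n, n-t)=3$ if and only if $2^{t-1} < n < 2^{t}$; (b) $d_{\max}(n, n-t)=4$ if and only if $s_{\max}(t) \leq n \leq 2^{t-1}$; (c) $d_{\max}(n, n-t)=5$ if and only if $s_{\max}(t-1) < n < s_{\max}(t)$; (d) $d_{\max}(n, n-t)\geq 6$ if and only if $n \leq s_{\max}(t-1)$.
   Context: $\mathbb{F}_2^t$ denotes the $t$-dimensional vector space over $\mathbb{F}_2$. A subset $M\subseteq \mathbb{F}_2^t$ is called Sidon if $m_1+m_2\neq m_3+m_4$ for all pairwise distinct $m_1,m_2,m_3,m_4\in M$. $s_{\max}(t)$ denotes the maximum size of a Sidon set in $\mathbb{F}_2^t$. A binary linear code of length $n$ and dimension $k$ is a $k$-dimensional subspace of $\mathbb{F}_2^n$; its minimum distance is the minimum Hamming weight of its nonzero codewords. $d_{\max}(n,k)$ is the maximum $d$ such that there exists a binary linear code of length $n$, dimension $k$ and minimum distance $d$. *)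

(* Defs.v *)
From mathcomp Require Import all_boot all_order all_algebra.
Set Implicit Arguments. Unset Strict Implicit. Unset Printing Implicit Defensive.
Import GRing.Theory.
Local Open Scope ring_scope.

Definition sidon (t : nat) (M : {set 'rV['F_2]_t}) : bool :=
  [forall m1 in M, forall m2 in M, forall m3 in M, forall m4 in M,
     uniq [:: m1; m2; m3; m4] ==> (m1 + m2 != m3 + m4)].

Definition smax (t : nat) : nat :=
  \max_(M : {set 'rV['F_2]_t} | sidon M) #|M|.

Definition wt (n : nat) (v : 'rV['F_2]_n) : nat := #|[set i | v 0 i != 0]|.

(* A binary linear [n,k] code is represented by a generator matrix
   G : 'M_(k,n) of rank k; its codewords are the rows v with (v <= G)%MS.
   Minimum distance = minimum weight of a nonzero codeword. *)
Definition mindist (k n : nat) (G : 'M['F_2]_(k, n)) : nat :=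
  \big[minn/n]_(v : 'rV['F_2]_n | (v <= G)%MS && (v != 0)) wt v.

Definition dmax (n k : nat) : nat :=
  \max_(G : 'M['F_2]_(k, n) | \rank G == k) mindist G.

(* Main.v *)
Require Import Defs.
From mathcomp Require Import all_boot all_order all_algebra.
Import GRing.Theory.
Local Open Scope ring_scope.
Set Implicit Arguments. Unset Strict Implicit. Unset Printing Implicit Defensive.

Lemma F2_add (x : 'F_2) : x + x = 0.
Proof. case: x => [[|[|i]] Hi] //; by apply/val_inj. Qed.
Lemma F2_1 (x : 'F_2) : x != 0 -> x = 1.
Proof. case: x => [[|[|i]] Hi] //; by move=> _; apply/val_inj. Qed.

Lemma addvv t (x : 'rV['F_2]_t) : x + x = 0.
Proof. by apply/matrixP => i j; rewrite !mxE F2_add. Qed.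

Lemma addv_eq0 t (x y : 'rV['F_2]_t) : (x + y == 0) = (x == y).
Proof.
apply/eqP/eqP => [e|->]; last exact: addvv.
by rewrite -[x]addr0 -(addvv y) addrA e add0r.
Qed.

Definition goodL t D (S : {set 'rV['F_2]_t}) :=
  forall s : seq 'rV['F_2]_t, uniq s -> {subset s <= S} ->
    (0 < size s < D)%N -> \sum_(x <- s) x != 0.

Lemma mul_supp n t (v : 'rV['F_2]_n) (H : 'M['F_2]_(n, t)) :
  v *m H = \sum_(i <- enum [set i | v 0 i != 0]) row i H.
Proof.
rewrite mulmx_sum_row big_enum /= [LHS](bigID (fun i => v 0 i != 0)) /=.
rewrite [X in _ + X]big1 ?addr0.
  apply: eq_big => i; first by rewrite inE.
  by move=> Hi; rewrite (F2_1 Hi) scale1r.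
by move=> i; rewrite negbK => /eqP ->; rewrite scale0r.
Qed.

Lemma mindist_ge k n D (G : 'M['F_2]_(k, n)) :
  (exists v : 'rV['F_2]_n, (v <= G)%MS && (v != 0)) ->
  (forall v : 'rV_n, (v <= G)%MS -> v != 0 -> (D <= wt v)%N) ->
  (D <= mindist G)%N.
Proof.
case=> v0 /andP[H0 H0'] H.
have Dn : (D <= n)%N.
  apply: leq_trans (H v0 H0 H0') _.
  by rewrite /wt; apply: leq_trans (max_card _) _; rewrite card_ord.
rewrite /mindist; apply: (big_ind (fun x => D <= x)%N) => //.
  by move=> x y; rewrite leq_min => -> ->.
by move=> v /andP[]; exact: H.
Qed.

Lemma bigmin_le (I : eqType) (r : seq I) (P : pred I) (F : I -> nat) x0 v :
  v \in r -> P v -> (\big[minn/x0]_(i <- r | P i) F i <= F v)%N.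
Proof.
elim: r => // a r IH; rewrite inE big_cons => /orP[/eqP <-|vr] Pv.
  by rewrite Pv geq_minl.
by case: (P a); rewrite ?geq_min IH ?orbT.
Qed.

Lemma mindist_le k n (G : 'M['F_2]_(k, n)) v :
  (v <= G)%MS -> v != 0 -> (mindist G <= wt v)%N.
Proof.
move=> Hv Hv0; rewrite /mindist; apply: bigmin_le; first exact: mem_index_enum.
by rewrite Hv Hv0.
Qed.

Lemma code_to_set n t D (G : 'M['F_2]_(n - t, n)) :
  (t <= n)%N -> \rank G = (n - t)%N -> (3 <= D)%N -> (D <= mindist G)%N ->
  exists S : {set 'rV['F_2]_t}, #|S| = n /\ goodL D S.
Proof.
move=> tn rG D3 DG.
pose C := cokermx G.
have rC : \rank C = t by rewrite mxrank_coker rG subKn.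
pose H := col_base C *m (pid_mx (\rank C) : 'M_(\rank C, t)).
have HE : forall v : 'rV_n, (v <= G)%MS = (v *m H == 0).
  move=> v; rewrite submxE -[cokermx G](mulmx_base C) mulmxA.
  rewrite mulmx_free_eq0 ?row_base_free // /H mulmxA [RHS]mulmx_free_eq0 //.
  by rewrite /row_free rank_pid_mx // rC.
pose h i := row i H.
have key : forall l : seq 'I_n, uniq l -> (0 < size l < D)%N ->
    \sum_(i <- l) h i != 0.
  move=> l ul /andP[l0 lD]; apply/negP => /eqP s0.
  pose v := \row_(i < n) (if i \in l then 1 else 0 : 'F_2).
  have vs : [set i | v 0 i != 0] = [set i in l].
    by apply/setP=> i; rewrite !inE mxE; case: (i \in l).
  have wv : wt v = size l by rewrite /wt vs cardsE; apply/card_uniqP.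
  have vH : v *m H = 0.
    rewrite mul_supp vs big_enum /= -[RHS]s0 big_uniq //; apply: eq_bigl => i; by rewrite inE.
  have v0 : v != 0.
    have [i il] : exists i, i \in l.
      by case: l l0 {ul lD s0 vs wv vH v} => // i l' _; exists i; rewrite inE eqxx.
    by apply/eqP => /matrixP/(_ 0 i); rewrite !mxE il.
  have := mindist_le (_ : (v <= G)%MS) v0; rewrite HE vH eqxx => /(_ isT).
  by rewrite wv => le; have := leq_trans DG le; rewrite leqNgt lD.
have hinj : injective h.
  move=> i j hij; apply/eqP; apply/negPn/negP => ij.
  have := key [:: i; j]; rewrite /= inE ij /= !big_cons big_nil addr0 hij addvv eqxx.
  by move/(_ isT D3).
exists (h @: setT); split; first by rewrite card_imset // cardsT card_ord.
move=> s us sS sz.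
pose l := [seq i <- enum 'I_n | h i \in s].
have pe : perm_eq (map h l) s.
  apply: uniq_perm => //; first by rewrite map_inj_uniq // filter_uniq // enum_uniq.
  move=> x; apply/mapP/idP.
    by case=> i; rewrite mem_filter => /andP[? _] ->.
  move=> xs; have := sS x xs; case/imsetP => i _ xi; exists i => //.
  by rewrite mem_filter mem_enum andbT -xi.
rewrite -(perm_big _ pe) big_map; apply: key.
  by rewrite filter_uniq // enum_uniq.
by rewrite -(size_map h) (perm_size pe).
Qed.

Lemma set_to_code n t D (S : {set 'rV['F_2]_t}) :
  (t < n)%N -> #|S| = n -> goodL D S ->
  exists G : 'M['F_2]_(n - t, n), \rank G = (n - t)%N /\ (D <= mindist G)%N.
Proof.
move=> tn cS gS.
pose h (i : 'I_n) := nth 0 (enum S) i.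
have hS : forall i, h i \in S.
  by move=> i; rewrite -mem_enum mem_nth // -cardE cS ltn_ord.
have hinj : injective h.
  move=> i j /eqP; rewrite /h nth_uniq ?enum_uniq -?cardE ?cS // => /eqP.
  exact: val_inj.
pose H := \matrix_(i < n) h i.
pose K := kermx H.
have rK : (n - t <= \rank K)%N.
  by rewrite mxrank_ker leq_sub2l // rank_leq_col.
pose G := (pid_mx (n - t) : 'M_(n - t, \rank K)) *m row_base K.
have rG : \rank G = (n - t)%N.
  apply/eqP; rewrite eqn_leq rank_leq_row /=.
  apply: leq_trans (mxrank_mul_min _ _).
  by rewrite rank_pid_mx // (eqP (row_base_free K)) addnK.
exists G; split => //.
have GK : forall v : 'rV_n, (v <= G)%MS -> v *m H = 0.
  move=> v vG; apply/eqP; rewrite -sub_kermx.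
  apply: submx_trans vG _; apply: submx_trans (submxMl _ _) _.
  by rewrite eq_row_base.
apply: mindist_ge.
  have G0 : G != 0 by rewrite -mxrank_eq0 rG subn_eq0 -ltnNge.
  case: (pickP (fun i => row i G != 0)) => [i Hi | H0].
    by exists (row i G); rewrite row_sub Hi.
  case/eqP: G0; apply/row_matrixP => i; rewrite row0; apply/eqP.
  by move: (H0 i) => /negbFE.
move=> v vG v0.
have := GK v vG; rewrite mul_supp => s0.
pose l := enum [set i | v 0 i != 0].
have := gS (map h l).
rewrite big_map.
have -> : \sum_(j <- l) h j = 0.
  by rewrite -[RHS]s0; apply: eq_bigr => i _; rewrite rowK.
rewrite eqxx size_map /l -cardE -/(wt v).
have wv : (0 < wt v)%N.
  rewrite /wt card_gt0; apply/set0Pn.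
  case: (pickP (fun i => v 0 i != 0)) => [i Hi | H0].
    by exists i; rewrite inE.
  case/eqP: v0; apply/matrixP => a b; rewrite mxE (ord1 a).
  by move: (H0 b) => /negbFE /eqP.
rewrite wv /= => H1.
case: (ltnP (wt v) D) => // wD; exfalso.
suff : false by []. apply: H1 wD.
- by rewrite map_inj_uniq // enum_uniq.
- by move=> x /mapP [i _ ->].
Qed.

Lemma dmax_ge n k D : (0 < D)%N ->
  (D <= dmax n k)%N <-> exists G : 'M['F_2]_(k, n), \rank G = k /\ (D <= mindist G)%N.
Proof.
move=> D0; split; last first.
  case=> G [rG DG]; apply: leq_trans DG _; rewrite /dmax.
  by apply: leq_bigmax_cond; rewrite rG.
move=> Dd.
case: (boolP [exists G : 'M['F_2]_(k, n), (\rank G == k) && (D <= mindist G)%N]).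
  by case/existsP => G /andP[/eqP rG DG]; exists G.
move/existsPn => Hn; exfalso.
have : (dmax n k <= D.-1)%N.
  apply/bigmax_leqP => G rG; move: (Hn G); rewrite rG /= -ltnNge => H.
  by rewrite -ltnS prednK.
by move=> H; have := leq_trans Dd H; rewrite leqNgt ltn_predL D0.
Qed.

Lemma E_iff n t D : (t < n)%N -> (3 <= D)%N ->
  (D <= dmax n (n - t))%N <-> exists S : {set 'rV['F_2]_t}, #|S| = n /\ goodL D S.
Proof.
move=> tn D3; have := @dmax_ge n (n - t) D; case; first by apply: leq_trans D3.
move=> H1 H2; split.
  move/H1.
  by case=> G [rG DG]; apply: (code_to_set (ltnW tn) rG D3 DG).
by case=> S [cS gS]; apply: H2; apply: (set_to_code tn cS gS).
Qed.

Lemma card_rV t : #|{: 'rV['F_2]_t}| = (2 ^ t)%N.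
Proof. by rewrite card_mx card_Fp // mul1n. Qed.

Lemma sub_card (T : finType) (A : {set T}) k :
  (k <= #|A|)%N -> exists2 B : {set T}, B \subset A & #|B| = k.
Proof.
move=> kA; exists [set x in take k (enum A)].
  by apply/subsetP => x; rewrite inE => /mem_take; rewrite mem_enum.
rewrite cardsE; move/card_uniqP: (take_uniq k (enum_uniq (mem A))) => ->.
by rewrite size_takel // -cardE.
Qed.

Lemma sidonP t (M : {set 'rV['F_2]_t}) a b c d : sidon M ->
  a \in M -> b \in M -> c \in M -> d \in M -> uniq [:: a; b; c; d] -> a + b != c + d.
Proof.
move=> /forallP/(_ a)/implyP H ha hb hc hd u.
move: (H ha) => /forallP/(_ b)/implyP/(_ hb)/forallP/(_ c)/implyP/(_ hc).
by move=> /forallP/(_ d)/implyP/(_ hd)/implyP/(_ u).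
Qed.

Lemma sidonI t (M : {set 'rV['F_2]_t}) :
  (forall a b c d, a \in M -> b \in M -> c \in M -> d \in M ->
     uniq [:: a; b; c; d] -> a + b != c + d) -> sidon M.
Proof.
move=> H; apply/forallP => a; apply/implyP => ha; apply/forallP => b; apply/implyP => hb.
apply/forallP => c; apply/implyP => hc; apply/forallP => d; apply/implyP => hd.
apply/implyP => u; exact: H.
Qed.

Lemma big_sidon t n : (0 < n)%N -> (n <= smax t)%N ->
  exists2 M : {set 'rV['F_2]_t}, sidon M & (n <= #|M|)%N.
Proof.
move=> n0 ns.
case: (boolP [exists M : {set 'rV['F_2]_t}, sidon M && (n <= #|M|)%N]).
  by case/existsP => M /andP[sM cM]; exists M.
move/existsPn => Hn; exfalso.
have : (smax t <= n.-1)%N.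
  apply/bigmax_leqP => M sM; move: (Hn M); rewrite sM /= -ltnNge => H.
  by rewrite -ltnS prednK.
by move=> H; have := leq_trans ns H; rewrite leqNgt ltn_predL n0.
Qed.

Lemma pair_ne t (a b : 'rV['F_2]_t) : a != b -> \sum_(x <- [:: a; b]) x != 0.
Proof. by rewrite !big_cons big_nil addr0 addv_eq0. Qed.

Lemma sum3 t (a b c : 'rV['F_2]_t) : \sum_(x <- [:: a; b; c]) x = 0 -> a + b = c.
Proof. by rewrite !big_cons big_nil addr0 addrA => /eqP; rewrite addv_eq0 => /eqP. Qed.

Lemma sum4 t (a b c d : 'rV['F_2]_t) : \sum_(x <- [:: a; b; c; d]) x = 0 -> a + b = c + d.
Proof. by rewrite !big_cons big_nil addr0 addrA => /eqP; rewrite addv_eq0 => /eqP. Qed.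

Lemma drop0 t (S : {set 'rV['F_2]_t}) (s : seq 'rV['F_2]_t) :
  uniq s -> {subset s <= 0 |: S} ->
  [/\ uniq [seq x <- s | x != 0], {subset [seq x <- s | x != 0] <= S},
      \sum_(x <- [seq x <- s | x != 0]) x = \sum_(x <- s) x
    & (size s <= (size [seq x <- s | x != 0%R]).+1)%N].
Proof.
move=> us sS; split.
- exact: filter_uniq.
- move=> x; rewrite mem_filter => /andP[x0 xs]; move: (sS x xs).
  by rewrite !inE (negbTE x0).
- rewrite big_filter big_mkcond; apply: eq_bigr => x _.
  by have [->|] := eqVneq x 0.
- rewrite size_filter -[in X in (X <= _)%N](count_predC (fun x : 'rV['F_2]_t => x != 0) s).
  rewrite -[X in (_ <= X)%N]addn1 leq_add2l.
  have -> : count (predC (fun x : 'rV['F_2]_t => x != 0)) s = count_mem 0 s.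
    by apply: eq_count => x /=; rewrite negbK.
  by rewrite count_uniq_mem // leq_b1.
Qed.

Lemma size_drop0 t (s : seq 'rV['F_2]_t) : (size [seq x <- s | x != 0%R] <= size s)%N.
Proof. by rewrite size_filter count_size. Qed.

Lemma uniq_rcons0 t (B : {set 'rV['F_2]_t}) s : uniq s -> {subset s <= B} ->
  (forall y, y \in B -> y != 0) -> uniq (rcons s 0).
Proof.
move=> us sB nz; rewrite rcons_uniq us andbT; apply/negP => H0.
by have := nz 0 (sB 0 H0); rewrite eqxx.
Qed.

Definition fe t' (x : 'rV['F_2]_t') : 'rV['F_2]_(t'.+1) := row_mx (const_mx 1 : 'rV_1) x.

Lemma fe_inj t' : injective (@fe t').
Proof.
move=> x y e; have e' : row_mx (const_mx 1 : 'rV['F_2]_1) x = row_mx (const_mx 1) y := e.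
by case: (eq_row_mx e').
Qed.

Definition i0 t' : 'I_(t'.+1) := lshift t' (0 : 'I_1).

Lemma feE t' (x : 'rV['F_2]_t') : fe x 0 (i0 t') = 1.
Proof. change (row_mx (const_mx 1 : 'rV['F_2]_1) x 0 (lshift t' (0 : 'I_1)) = 1); by rewrite row_mxEl mxE. Qed.

Lemma mxDE m n (A B : 'M['F_2]_(m, n)) i j : (A + B) i j = A i j + B i j.
Proof. by rewrite mxE. Qed.

Definition i1 t' (j : 'I_t') : 'I_(t'.+1) := rshift 1 j.

Lemma feEr t' (x : 'rV['F_2]_t') j : fe x 0 (i1 j) = x 0 j.
Proof. change (row_mx (const_mx 1 : 'rV['F_2]_1) x 0 (rshift 1 j) = x 0 j); by rewrite row_mxEr. Qed.

Lemma fe_eq4 t' (a b c d : 'rV['F_2]_t') : fe a + fe b = fe c + fe d -> a + b = c + d.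
Proof.
move=> e; apply/matrixP => i j; rewrite (ord1 i) !mxE.
by have := congr1 (fun z : 'rV_(t'.+1) => z 0 (i1 j)) e; rewrite /= !mxDE !feEr.
Qed.

Lemma parity t' (s : seq 'rV['F_2]_(t'.+1)) :
  (forall y, y \in s -> y 0 (i0 t') = 1) ->
  (\sum_(y <- s) y) 0 (i0 t') = (size s)%:R.
Proof.
elim: s => [|y s IH] H; first by rewrite big_nil mxE.
rewrite big_cons mxE H ?mem_head // IH; first by rewrite /= mulrS.
by move=> z zs; apply: H; rewrite inE zs orbT.
Qed.

Lemma par_ne t' (s : seq 'rV['F_2]_(t'.+1)) :
  (forall y, y \in s -> y 0 (i0 t') = 1) ->
  ((size s)%:R : 'F_2) != 0 -> \sum_(y <- s) y != 0.
Proof.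
move=> H H1; apply/eqP => /matrixP/(_ 0 (i0 t')).
by rewrite parity // mxE => e; rewrite e eqxx in H1.
Qed.

Lemma goodL_nz t D (S : {set 'rV['F_2]_t}) : (1 < D)%N -> goodL D S -> forall z, z \in S -> z != 0.
Proof.
move=> D1 gS z zS; have := gS [:: z]; rewrite big_seq1; apply => //.
by move=> x; rewrite inE => /eqP ->.
Qed.

Lemma good3 t n :
  (exists S : {set 'rV['F_2]_t}, #|S| = n /\ goodL 3 S) <-> (n < 2 ^ t)%N.
Proof.
split.
  case=> S [cS gS].
  have nz := goodL_nz (isT : (1 < 3)%N) gS.
  have sub : S \subset [set~ 0].
    by apply/subsetP => x xS; rewrite !inE; apply: nz.
  rewrite -cS; apply: leq_ltn_trans (subset_leq_card sub) _.
  by rewrite cardsC1 card_rV ltn_predL expn_gt0.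
move=> nt.
have : (n <= #|[set~ (0%R : 'rV['F_2]_t)]|)%N.
  by rewrite cardsC1 card_rV -ltnS prednK // expn_gt0.
case/sub_card => S sS cS; exists S; split => //.
move=> s us sub /andP[s0 s3].
case: s us sub s0 s3 => [|a [|b [|c s]]] //= us sub _ _.
  rewrite big_seq1; have := subsetP sS a (sub a (mem_head _ _)); by rewrite !inE.
by apply: pair_ne; move: us; rewrite inE andbT.
Qed.

Lemma good4 t n : (1 < t)%N -> (0 < n)%N ->
  (exists S : {set 'rV['F_2]_t}, #|S| = n /\ goodL 4 S) <-> (n <= 2 ^ t.-1)%N.
Proof.
move=> t1 n0; split.
  case=> S [cS gS].
  have nz := goodL_nz (isT : (1 < 4)%N) gS.
  have [s0 s0S] : exists s0, s0 \in S by apply/set0Pn; rewrite -card_gt0 cS.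
  pose T := [set x + s0 | x in S].
  have cT : #|T| = n by rewrite card_imset // => x y; exact: addIr.
  have dis : forall y, y \in S -> y \in T -> False.
    move=> y yS /imsetP [x xS yx].
    have e : y + x + s0 = 0 by rewrite yx [x + s0 + x]addrAC addvv add0r addvv.
    case: (eqVneq y x) => [yx'|nyx].
      by move: e; rewrite yx' addvv add0r => e0; move: (nz _ s0S); rewrite e0 eqxx.
    case: (eqVneq y s0) => [ys|nys].
      by move: e; rewrite ys addrAC addvv add0r => x0; move: (nz _ xS); rewrite x0 eqxx.
    case: (eqVneq x s0) => [xs|nxs].
      by move: e; rewrite xs -addrA addvv addr0 => y0; move: (nz _ yS); rewrite y0 eqxx.
    have := gS [:: y; x; s0]; rewrite !big_cons big_nil addr0 addrA e eqxx; move=> H; suff : ~~ true by []; apply: H => //.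
      by rewrite /= !inE negb_or nyx nys nxs.
    by move=> z; rewrite !inE => /or3P [] /eqP ->.
  have cU : #|S :|: T| = (n + n)%N.
    have := cardsUI S T.
    have -> : S :&: T = set0.
      apply/setP => y; rewrite !inE; apply/negbTE/negP => /andP[a b]; exact: dis a b.
    by rewrite cards0 addn0 cS cT.
  have : (n + n <= 2 ^ t)%N by rewrite -cU -(card_rV t) max_card.
  have e2 : (2 ^ t = (2 ^ t.-1).*2)%N by rewrite -mul2n -expnS prednK // ltnW.
  by rewrite e2 addnn leq_double.
case: t t1 => // t' _ /= nt.
have : (n <= #|[set: 'rV['F_2]_t']|)%N by rewrite cardsT card_rV.
case/sub_card => B _ cB.
exists (@fe t' @: B); split; first by rewrite card_imset //; exact: fe_inj.
move=> s us sub /andP[s0 s4].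
have par : forall y, y \in s -> y 0 (i0 t') = 1.
  by move=> y /sub /imsetP [x _ ->]; exact: feE.
case: s us sub s0 s4 par => [|a [|b [|c [|d s]]]] //= us sub _ _ par.
- by apply: par_ne.
- by apply: pair_ne; move: us; rewrite inE andbT.
- by apply: par_ne.
Qed.

Lemma good5 t n :
  (exists S : {set 'rV['F_2]_t}, #|S| = n /\ goodL 5 S) <-> (n < smax t)%N.
Proof.
split.
  case=> S [cS gS].
  have nz := goodL_nz (isT : (1 < 5)%N) gS.
  have S0 : (0 : 'rV_t) \notin S by apply/negP => /nz; rewrite eqxx.
  pose M := 0 |: S.
  have cM : #|M| = n.+1 by rewrite cardsU1 S0 cS.
  have sM : sidon M.
    apply: sidonI => a b c d ha hb hc hd u; apply/negP => /eqP e.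
    have s0 : \sum_(x <- [:: a; b; c; d]) x = 0.
      by rewrite !big_cons big_nil addr0 addrA e addvv.
    have sub : {subset [:: a; b; c; d] <= 0 |: S}.
      by move=> x; rewrite !in_cons in_nil orbF => /or4P [] /eqP ->.
    case: (drop0 u sub) => u' sub' sm sz.
    have := gS _ u' sub'; rewrite sm s0 eqxx => H; suff : ~~ true by [].
    apply: H; rewrite (leq_ltn_trans (size_drop0 _)) // andbT.
    by move: sz => /=; rewrite ltnS; apply: leq_trans.
  apply: leq_trans (_ : #|M| <= smax t)%N; first by rewrite cM.
  by apply: leq_bigmax_cond.
move=> nt.
have [M0 sM0 cM0] := big_sidon (ltn0Sn n) nt.
have [m0 m0M] : exists m0, m0 \in M0 by apply/card_gt0P; apply: leq_trans cM0.
pose M' := (fun y => y + m0) @^-1: (M0 :\ m0).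
have cM' : (n <= #|M'|)%N.
  rewrite card_preimset; last exact: addIr.
  by move: cM0; rewrite (cardsD1 m0 M0) m0M add1n ltnS.
case/sub_card: cM' => B sB cB; exists B; split => //.
have inB : forall y, y \in B -> (y + m0 \in M0) && (y + m0 != m0).
  by move=> y /(subsetP sB); rewrite !inE andbC.
have nzB : forall y, y \in B -> y != 0.
  move=> y /inB /andP[_]; apply: contraNneq => ->; by rewrite add0r.
have inB1 : forall y, y \in B -> y + m0 \in M0 by move=> y /inB /andP[].
move=> s us sub /andP[s0 s5].
have ha : forall y, y \in s -> y + m0 \in M0 by move=> y /sub /inB1.
have xinj : injective (fun y => y + m0) by exact: addIr.
case: s us sub s0 s5 ha => [|a [|b [|c [|d [|e s]]]]] //= us sub _ _ ha.
- by rewrite big_seq1; apply: nzB; apply: sub; rewrite inE.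
- by apply: pair_ne; move: us; rewrite inE andbT.
- apply/negP => /eqP /sum3 e.
  have U : uniq (map (fun y => y + m0) [:: a; b; c; 0]).
    rewrite map_inj_uniq //; exact: (uniq_rcons0 (us : uniq [:: a; b; c]) sub nzB).
  move: U; rewrite /= add0r => U.
  have := sidonP sM0 (ha a ltac:(by rewrite !inE eqxx)) (ha b ltac:(by rewrite !inE eqxx !orbT))
    (ha c ltac:(by rewrite !inE eqxx !orbT)) m0M U.
  by rewrite addrACA addvv addr0 -addrA addvv addr0 e eqxx.
- apply/negP => /eqP /sum4 e.
  have U : uniq (map (fun y => y + m0) [:: a; b; c; d]) by rewrite map_inj_uniq.
  have := sidonP sM0 (ha a ltac:(by rewrite !inE eqxx)) (ha b ltac:(by rewrite !inE eqxx !orbT))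
    (ha c ltac:(by rewrite !inE eqxx !orbT)) (ha d ltac:(by rewrite !inE eqxx !orbT)) U.
  by rewrite addrACA addvv addr0 [c + m0 + _]addrACA addvv addr0 e eqxx.
Qed.

Lemma good6 t n : (1 < t)%N -> (0 < n)%N ->
  (exists S : {set 'rV['F_2]_t}, #|S| = n /\ goodL 6 S) <-> (n <= smax t.-1)%N.
Proof.
move=> t1 n0; split.
  case=> S [cS gS].
  have nz := goodL_nz (isT : (1 < 6)%N) gS.
  have S0 : (0 : 'rV_t) \notin S by apply/negP => /nz; rewrite eqxx.
  have [s0 s0S] : exists s0, s0 \in S by apply/set0Pn; rewrite -card_gt0 cS.
  pose C := cokermx s0.
  have rC : \rank C = t.-1 by rewrite mxrank_coker rank_rV nz // subn1.
  pose Q := col_base C *m (pid_mx (\rank C) : 'M_(\rank C, t.-1)).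
  have QE : forall x : 'rV_t, (x *m Q == 0) = (x <= s0)%MS.
    move=> x; rewrite submxE -[cokermx s0](mulmx_base C) mulmxA.
    rewrite [RHS]mulmx_free_eq0 ?row_base_free // /Q mulmxA [LHS]mulmx_free_eq0 //.
    by rewrite /row_free rank_pid_mx // rC.
  have sub_s0 : forall x : 'rV_t, (x <= s0)%MS -> x = 0 \/ x = s0.
    move=> x /sub_rVP [a ->]; case: (eqVneq a 0) => [->|/F2_1 ->].
      by left; rewrite scale0r.
    by right; rewrite scale1r.
  pose X := 0 |: (S :\ s0).
  have keyQ : forall u : seq 'rV_t, uniq u -> {subset u <= X} -> (2 <= size u <= 4)%N ->
      (\sum_(x <- u) x) *m Q != 0.
    move=> u uu uX /andP[u2 u4]; rewrite QE; apply/negP => /sub_s0 H.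
    case: (drop0 uu uX) => uu' sub' sm sz.
    have sz1 : (0 < size [seq x <- u | x != 0%R])%N.
      by rewrite -ltnS; apply: leq_trans sz.
    have sz2 : (size [seq x <- u | x != 0%R] <= 4)%N.
      exact: leq_trans (size_drop0 _) u4.
    case: H => H.
      have := gS _ uu' (fun x xu => (subsetP (subD1set S s0)) x (sub' x xu)).
      rewrite sm H eqxx => H1; suff : ~~ true by []; apply: H1.
      by rewrite sz1 /= ltnS (leq_trans sz2).
    have := gS (s0 :: [seq x <- u | x != 0%R]).
    rewrite big_cons sm H addvv eqxx => H1; suff : ~~ true by []; apply: H1.
    - rewrite /= uu' andbT; apply/negP => /sub'; by rewrite !inE eqxx.
    - move=> x; rewrite inE => /orP [/eqP -> //|/sub']; by rewrite !inE => /andP[].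
    - by rewrite /= ltnS ltnS (leq_trans sz2).
  have XS : forall x, x \in X -> (x == 0) || (x \in S :\ s0) by move=> x; rewrite !inE.
  have cX : #|X| = n.
    rewrite cardsU1 !inE (negbTE S0) andbF /= add1n.
    by move: cS; rewrite (cardsD1 s0 S) s0S add1n => <-.
  have injQ : {in X &, injective (fun x => x *m Q)}.
    move=> x y xX yX /= e; apply/eqP; apply/negPn/negP => xy.
    have := keyQ [:: x; y]; rewrite !big_cons big_nil addr0 mulmxDl e addvv eqxx.
    move=> H1; suff : ~~ true by []; apply: H1 => //.
      by rewrite /= inE xy.
    by move=> z; rewrite !in_cons in_nil orbF => /orP [] /eqP ->.
  pose M := [set x *m Q | x in X].
  have cM : #|M| = n by rewrite card_in_imset // cX.
  have sM : sidon M.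
    apply: sidonI => a b c d /imsetP [xa xaX ->] /imsetP [xb xbX ->]
      /imsetP [xc xcX ->] /imsetP [xd xdX ->] u.
    have ux : uniq [:: xa; xb; xc; xd].
      exact: (map_uniq (f := fun x => x *m Q) (s := [:: xa; xb; xc; xd]) u).
    have := keyQ _ ux.
    rewrite !big_cons big_nil addr0 !mulmxDl addrA addv_eq0 => H1; apply: H1 => //.
    by move=> z; rewrite !in_cons in_nil orbF => /or4P [] /eqP ->.
  rewrite -cM; exact: leq_bigmax_cond.
case: t t1 => // t' _ /= nt.
have [M0 sM0 cM0] := big_sidon n0 nt.
case/sub_card: cM0 => B sB cB.
exists (@fe t' @: B); split; first by rewrite card_imset //; exact: fe_inj.
move=> s us sub /andP[s0 s6].
have par : forall y, y \in s -> y 0 (i0 t') = 1.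
  by move=> y /sub /imsetP [x _ ->]; exact: feE.
case: s us sub s0 s6 par => [|a [|b [|c [|d [|e [|g s]]]]]] //= us sub _ _ par.
- by apply: par_ne.
- by apply: pair_ne; move: us; rewrite inE andbT.
- by apply: par_ne.
- apply/negP => /eqP /sum4 E.
  case/imsetP: (sub a ltac:(by rewrite !inE eqxx)) => xa xaB ea.
  case/imsetP: (sub b ltac:(by rewrite !inE eqxx !orbT)) => xb xbB eb.
  case/imsetP: (sub c ltac:(by rewrite !inE eqxx !orbT)) => xc xcB ec.
  case/imsetP: (sub d ltac:(by rewrite !inE eqxx !orbT)) => xd xdB ed.
  move: E us; rewrite ea eb ec ed => /fe_eq4 E us.
  have ux : uniq [:: xa; xb; xc; xd].
    exact: (map_uniq (f := @fe t') (s := [:: xa; xb; xc; xd]) us).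
  have := sidonP sM0 (subsetP sB _ xaB) (subsetP sB _ xbB) (subsetP sB _ xcB)
    (subsetP sB _ xdB) ux.
  by rewrite E eqxx.
- by apply: par_ne.
Qed.

Theorem proposition3p4 (n t : nat) (Hnt : (t < n)%N) (Ht : (2 <= t)%N) :
  [/\ dmax n (n - t) = 3 <-> (2 ^ t.-1 < n < 2 ^ t)%N,
      dmax n (n - t) = 4 <-> (smax t <= n <= 2 ^ t.-1)%N,
      dmax n (n - t) = 5 <-> (smax t.-1 < n < smax t)%N
    & (6 <= dmax n (n - t))%N <-> (n <= smax t.-1)%N].
Proof.
have n0 : (0 < n)%N by apply: leq_ltn_trans Hnt.
set d := dmax n (n - t).
have B3 : (3 <= d)%N = (n < 2 ^ t)%N.
  by apply/idP/idP => [/(E_iff Hnt (isT : (3 <= 3)%N))/good3|/good3/(E_iff Hnt (isT : (3 <= 3)%N))].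
have B4 : (4 <= d)%N = (n <= 2 ^ t.-1)%N.
  by apply/idP/idP => [/(E_iff Hnt (isT : (3 <= 4)%N))/(good4 Ht n0)|/(good4 Ht n0)/(E_iff Hnt (isT : (3 <= 4)%N))].
have B5 : (5 <= d)%N = (n < smax t)%N.
  by apply/idP/idP => [/(E_iff Hnt (isT : (3 <= 5)%N))/good5|/good5/(E_iff Hnt (isT : (3 <= 5)%N))].
have B6 : (6 <= d)%N = (n <= smax t.-1)%N.
  by apply/idP/idP => [/(E_iff Hnt (isT : (3 <= 6)%N))/(good6 Ht n0)|/(good6 Ht n0)/(E_iff Hnt (isT : (3 <= 6)%N))].
have eqk : forall k, d = k <-> (k <= d)%N && ~~ (k.+1 <= d)%N.
  move=> k; split => [->|/andP[a b]]; first by rewrite leqnn ltnn.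
  by apply/eqP; rewrite eqn_leq a andbT leqNgt.
split.
- by apply: iff_trans (eqk _) _; rewrite B3 B4 -ltnNge andbC.
- by apply: iff_trans (eqk _) _; rewrite B4 B5 -leqNgt andbC.
- by apply: iff_trans (eqk _) _; rewrite B5 B6 -ltnNge andbC.
- by rewrite B6.
Qed.
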